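(* Let $R$ be a ring and let $\mathcal{S}$ be a sublattice of the lattice of two-sided ideals of $R$ which is closed under arbitrary intersections and contains $\{0\}$ and $R$. Suppose that for each $I\in\mathcal{S}$ we have $I=\ker(\{\mathfrak{p}\in\mathrm{Spec}_{\mathcal{S}}(R):\mathfrak{p}\supseteq I\})$. For an open set $U$ of $\mathrm{Spec}_{\mathcal{S}}(R)$ (Jacobson topology) put $R[U]=\ker(U^c)$. Then for all open $U,V$ we have $$R[U\cup V]=R[U]+R[V]\quad\text{and}\quad R[U\cap V]=R[U]\cap R[V].$$ Consequently, if $V_1,V_2,U_1,U_2$ are open with $V_1\subseteq U_1$, $V_2\subseteq U_2$ and $U_1\setminus V_1=U_2\setminus V_2$, then there exists an isomorphism from $R[U_1]/R[V_1]$ to $R[U_2]/R[V_2]$, and this isomorphism is natural: if also $V_3\subseteq U_3$ are open with $U_3\setminus V_3=U_1\setminus V_1$, then the composition of the isomorphisms $R[U_1]/R[V_1]\to R[U_2]/R[V_2]$ and $R[U_2]/R[V_2]\to R[U_3]/R[V_3]$ equals the isomorphism $R[U_1]/R[V_1]\to R[U_3]/R[V_3]$.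
   Context: An ideal $P\in\mathcal{S}$ is $\mathcal{S}$-prime if $P\neq R$ and for all $I,J\in\mathcal{S}$, $IJ\subseteq P$ implies $I\subseteq P$ or $J\subseteq P$; $\mathrm{Spec}_{\mathcal{S}}(R)$ is the set of $\mathcal{S}$-prime ideals. For $T\subseteq\mathrm{Spec}_{\mathcal{S}}(R)$, $\ker(T)=\bigcap_{\mathfrak{p}\in T}\mathfrak{p}$ (with $\ker(\emptyset)=R$), and $U^c$ denotes complement in $\mathrm{Spec}_{\mathcal{S}}(R)$. The Jacobson topology is the topology whose closure operation is $\overline{T}=\{\mathfrak{p}\in\mathrm{Spec}_{\mathcal{S}}(R):\mathfrak{p}\supseteq\ker(T)\}$. *)

(* Defs.v *)
From HB Require Import structures.
From mathcomp Require Import all_boot all_algebra.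
From mathcomp Require Import boolp classical_sets.
Set Implicit Arguments. Unset Strict Implicit. Unset Printing Implicit Defensive.
Import GRing.Theory.
Local Open Scope ring_scope.
Local Open Scope classical_set_scope.

Section Ideals.
Variable R : pzRingType.

Definition is_ideal (I : set R) : Prop :=
  [/\ I 0,
      (forall x y, I x -> I y -> I (x + y)),
      (forall x, I x -> I (- x)),
      (forall r x, I x -> I (r * x)) &
      (forall r x, I x -> I (x * r))].

Definition isum (I J : set R) : set R :=
  [set z | exists a b, [/\ I a, J b & z = a + b]].

Definition iprod (I J : set R) : set R :=
  [set z | forall K : set R, is_ideal K ->
     (forall a b, I a -> J b -> K (a * b)) -> K z].

Definition good_family (S : set (set R)) : Prop :=
  (forall I, S I -> is_ideal I) /\
  (forall I J, S I -> S J -> S (isum I J)) /\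
  (forall I J, S I -> S J -> S (I `&` J)) /\
  (forall F : set (set R), F `<=` S -> S (\bigcap_(I in F) I)) /\
  S [set 0 : R] /\ S setT.

Definition Sprime (S : set (set R)) (P : set R) : Prop :=
  [/\ S P, P <> setT &
      forall I J, S I -> S J -> iprod I J `<=` P -> I `<=` P \/ J `<=` P].

Definition Spec (S : set (set R)) : set (set R) := [set P | Sprime S P].

(* ker T = intersection of the primes in T (ker of the empty family is R) *)
Definition ker (T : set (set R)) : set R := \bigcap_(p in T) p.

Definition jclosure (S : set (set R)) (T : set (set R)) : set (set R) :=
  [set p | Spec S p /\ ker T `<=` p].

Definition scompl (S : set (set R)) (U : set (set R)) : set (set R) :=
  Spec S `\` U.

Definition jopen (S : set (set R)) (U : set (set R)) : Prop :=
  U `<=` Spec S /\ jclosure S (scompl S U) = scompl S U.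

Definition sect (S : set (set R)) (U : set (set R)) : set R :=
  ker (scompl S U).

(* f : R -> R represents an isomorphism I1/J1 -> I2/J2 (J1 ⊆ I1, J2 ⊆ I2
   ideals): it maps I1 into I2, is well defined and injective modulo J1/J2,
   surjective modulo J2, and compatible (modulo J2) with addition,
   multiplication and the left/right R-actions. *)
Definition quot_iso (I1 J1 I2 J2 : set R) (f : R -> R) : Prop :=
  [/\ (forall x, I1 x -> I2 (f x)),
      (forall x y, I1 x -> I1 y -> J1 (x - y) -> J2 (f x - f y)),
      (forall x y, I1 x -> I1 y -> J2 (f x - f y) -> J1 (x - y)),
      (forall z, I2 z -> exists x, I1 x /\ J2 (z - f x)) &
      [/\ (forall x y, I1 x -> I1 y -> J2 (f (x + y) - (f x + f y))),
          (forall x y, I1 x -> I1 y -> J2 (f (x * y) - f x * f y)),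
          (forall r x, I1 x -> J2 (f (r * x) - r * f x)) &
          (forall r x, I1 x -> J2 (f (x * r) - f x * r))]].

End Ideals.

(* Main.v *)
Require Import Defs.
From HB Require Import structures.
From mathcomp Require Import all_boot all_algebra.
From mathcomp Require Import boolp classical_sets.
Import GRing.Theory.
Local Open Scope ring_scope.
Local Open Scope classical_set_scope.

Section H.
Variable R : pzRingType.
Variable S : set (set R).
Hypothesis gS : good_family S.

Lemma sectP U z : sect S U z <-> forall p, Spec S p -> ~ U p -> p z.
Proof. by split => [h p sp nu|h p [sp nu]]; [apply: h|apply: h]. Qed.

Lemma sect_ideal U : is_ideal (sect S U).
Proof.
have idp p : Spec S p -> is_ideal p.
  move=> sp; have [sp' _ _] : Sprime S p := sp; case: gS => hi _; exact: hi.
split.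
- by apply/sectP => p sp _; case: (idp p sp).
- move=> x y /sectP hx /sectP hy; apply/sectP => p sp nu; case: (idp p sp) => _ hD _ _ _; apply: hD; [exact: hx sp nu|exact: hy sp nu].
- move=> x /sectP hx; apply/sectP => p sp nu; case: (idp p sp) => _ _ hN _ _; apply: hN; exact: hx sp nu.
- move=> r x /sectP hx; apply/sectP => p sp nu; case: (idp p sp) => _ _ _ hM _; apply: hM; exact: hx sp nu.
- move=> r x /sectP hx; apply/sectP => p sp nu; case: (idp p sp) => _ _ _ _ hM; apply: hM; exact: hx sp nu.
Qed.

Lemma sect_sub U V : U `<=` V -> sect S U `<=` sect S V.
Proof. by move=> uv z /sectP h; apply/sectP => p sp nv; apply: h => // /uv. Qed.

Lemma sect_sep A B C z : A `&` B `<=` C -> sect S A z -> sect S B z -> sect S C z.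
Proof.
move=> abc /sectP ha /sectP hb; apply/sectP => p sp nc.
have [Ap|nA] := pselect (A p); last exact: ha.
have [Bp|nB] := pselect (B p); last exact: hb.
by case: nc; apply: abc.
Qed.

Lemma sect_S U : S (sect S U).
Proof.
case: gS => _ [_ [_ [hb _]]]; apply: hb.
by move=> p [[sp _ _] _].
Qed.

Lemma open_out U p : jopen S U -> Spec S p -> sect S U `<=` p -> ~ U p.
Proof.
move=> [_ hc] sp sub.
have : jclosure S (scompl S U) p by split.
by rewrite hc => -[].
Qed.

Lemma sectI U V : sect S (U `&` V) = sect S U `&` sect S V.
Proof.
apply/seteqP; split => z.
- by move=> h; split; apply: sect_sub h => p [].
- by move=> [hu hv]; exact: (@sect_sep U V (U `&` V) z (fun p h => h) hu hv).
Qed.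

Lemma openI U V : jopen S U -> jopen S V -> jopen S (U `&` V).
Proof.
move=> oU oV; split; first by move=> p [/(proj1 oU)].
apply/seteqP; split => p; last first.
  by move=> hp; split; [case: hp|move=> z hz; apply: hz].
move=> [sp sub]; split => // -[Up Vp].
have hpr := sp; case: hpr => _ _ hpr.
have := hpr _ _ (sect_S U) (sect_S V).
case.
- move=> z hz; apply: sub; change (sect S (U `&` V) z); apply: hz; first exact: sect_ideal.
  move=> a b ha hb; rewrite sectI; split.
  + by case: (sect_ideal U) => _ _ _ _ hM; apply: hM.
  + by case: (sect_ideal V) => _ _ _ hM _; apply: hM.
- move=> h; exact: (open_out _ _ oU sp h Up).
- by move=> h; exact: (open_out _ _ oV sp h Vp).
Qed.

Hypothesis hker : forall I, S I -> I = ker [set p | Spec S p /\ I `<=` p].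

Lemma sectU U V : jopen S U -> jopen S V ->
  sect S (U `|` V) = isum (sect S U) (sect S V).
Proof.
move=> oU oV; apply/seteqP; split => z; last first.
  move=> [a [b [ha hb ->]]]; case: (sect_ideal (U `|` V)) => _ hD _ _ _.
  by apply: hD; [apply: sect_sub ha => p; left|apply: sect_sub hb => p; right].
move=> /sectP hz.
have SI : S (isum (sect S U) (sect S V)).
  by case: gS => _ [hs _]; apply: hs; apply: sect_S.
rewrite (hker _ SI) => p [sp sub]; apply: hz => // -[Up|Vp].
- apply: (open_out _ _ oU sp) Up => a ha; apply: sub; exists a, 0; split => //.
  + by case: (sect_ideal V).
  + by rewrite addr0.
- apply: (open_out _ _ oV sp) Vp => b hb; apply: sub; exists 0, b; split => //.
  + by case: (sect_ideal U).
  + by rewrite add0r.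
Qed.


Definition cg W a b := sect S W (a - b).

Lemma cg_sym W a b : cg W a b -> cg W b a.
Proof. by rewrite /cg -opprB => h; case: (sect_ideal W) => _ _ hN _ _; rewrite -[b - a]opprK; apply: hN. Qed.

Lemma cg_trans W a b c : cg W a b -> cg W b c -> cg W a c.
Proof.
rewrite /cg => h1 h2; case: (sect_ideal W) => _ hD _ _ _.
by have := hD _ _ h1 h2; rewrite addrA subrK.
Qed.

Lemma cg_add W a b c d : cg W a b -> cg W c d -> cg W (a + c) (b + d).
Proof.
rewrite /cg => h1 h2; case: (sect_ideal W) => _ hD _ _ _.
by have := hD _ _ h1 h2; rewrite opprD addrACA.
Qed.

Lemma cg_mull W r a b : cg W a b -> cg W (r * a) (r * b).
Proof. by rewrite /cg -mulrBr => h; case: (sect_ideal W) => _ _ _ hM _; apply: hM. Qed.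

Lemma cg_mulr W r a b : cg W a b -> cg W (a * r) (b * r).
Proof. by rewrite /cg -mulrBl => h; case: (sect_ideal W) => _ _ _ _ hM; apply: hM. Qed.

Lemma cg_sub W W' a b : W `<=` W' -> cg W a b -> cg W' a b.
Proof. by move=> s; apply: sect_sub. Qed.

Lemma sB W a b : sect S W a -> sect S W b -> sect S W (a - b).
Proof. by move=> ha hb; case: (sect_ideal W) => _ hD hN _ _; apply: hD => //; apply: hN. Qed.

Definition phi (U1 V1 U2 V2 : set (set R)) (x : R) : R :=
  xget 0 [set a | sect S (U1 `&` U2) a /\ sect S V1 (x - a)].

Lemma decomp U1 V1 U2 V2 x : jopen S U1 -> jopen S V1 -> jopen S U2 ->
  V1 `<=` U1 -> U1 `\` V1 = U2 `\` V2 -> sect S U1 x ->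
  exists a, sect S (U1 `&` U2) a /\ sect S V1 (x - a).
Proof.
move=> o1 ov1 o2 s1 e hx.
have eU : U1 = V1 `|` (U1 `&` U2).
  apply/seteqP; split => p.
  - move=> u1; have [v|nv] := pselect (V1 p); first by left.
    right; split => //; have : (U1 `\` V1) p by [].
    by rewrite e => -[].
  - by case => [/s1|[]].
move: hx; rewrite {1}eU (sectU _ _ ov1 (openI _ _ o1 o2)) => -[v [a [hv ha ->]]].
by exists a; split => //; rewrite addrK.
Qed.

Lemma phiP U1 V1 U2 V2 x : jopen S U1 -> jopen S V1 -> jopen S U2 ->
  V1 `<=` U1 -> U1 `\` V1 = U2 `\` V2 -> sect S U1 x ->
  sect S (U1 `&` U2) (phi U1 V1 U2 V2 x) /\ cg V1 x (phi U1 V1 U2 V2 x).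
Proof. by move=> o1 ov1 o2 s1 e hx; exact: (@xgetPex _ 0 [set a | sect S (U1 `&` U2) a /\ sect S V1 (x - a)] (decomp _ _ _ _ _ o1 ov1 o2 s1 e hx)). Qed.

Lemma keyI U1 V1 U2 V2 t : V1 `<=` U1 -> V2 `<=` U2 -> U1 `\` V1 = U2 `\` V2 ->
  sect S (U1 `&` U2) t -> sect S V1 t -> sect S V2 t.
Proof.
move=> s1 s2 e ha hv; apply: (sect_sep _ _ _ _ _ ha hv) => p [[u1 u2] v1].
have [//|nv2] := pselect (V2 p).
have : (U2 `\` V2) p by [].
by rewrite -e => -[].
Qed.


Arguments sect_sub {U V}.
Lemma sIr A B : sect S (A `&` B) `<=` sect S B.
Proof. by apply: sect_sub => p []. Qed.
Lemma sIl A B : sect S (A `&` B) `<=` sect S A.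
Proof. by apply: sect_sub => p []. Qed.
Arguments sIr {A B}. Arguments sIl {A B}.
Arguments cg_sym {W a b}.
Arguments cg_trans {W a b c}.
Arguments cg_add {W a b c d}.
Arguments cg_mull {W} r {a b}.
Arguments cg_mulr {W} r {a b}.
Arguments cg_sub {W W' a b}.
Arguments sB {W a b}.
Arguments keyI {U1 V1 U2 V2 t}.
Arguments sect_sep {A B C z}.

Lemma main_thm :
  (forall U V, jopen S U -> jopen S V ->
     sect S (U `|` V) = isum (sect S U) (sect S V) /\
     sect S (U `&` V) = sect S U `&` sect S V) /\
  (exists phi : set (set R) -> set (set R) -> set (set R) -> set (set R) -> R -> R,
     (forall U1 V1 U2 V2,
        jopen S U1 -> jopen S V1 -> jopen S U2 -> jopen S V2 ->
        V1 `<=` U1 -> V2 `<=` U2 -> U1 `\` V1 = U2 `\` V2 ->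
        quot_iso (sect S U1) (sect S V1) (sect S U2) (sect S V2)
                 (phi U1 V1 U2 V2)) /\
     (forall U1 V1 U2 V2 U3 V3,
        jopen S U1 -> jopen S V1 -> jopen S U2 -> jopen S V2 ->
        jopen S U3 -> jopen S V3 ->
        V1 `<=` U1 -> V2 `<=` U2 -> V3 `<=` U3 ->
        U1 `\` V1 = U2 `\` V2 -> U3 `\` V3 = U1 `\` V1 ->
        forall x, sect S U1 x ->
          sect S V3 (phi U2 V2 U3 V3 (phi U1 V1 U2 V2 x) - phi U1 V1 U3 V3 x))).
Proof.
split.
  by move=> U V oU oV; split; [exact: sectU|exact: sectI].
exists phi; split.
- move=> U1 V1 U2 V2 o1 ov1 o2 ov2 s1 s2 e.
  set f := phi U1 V1 U2 V2.
  have P x : sect S U1 x -> sect S (U1 `&` U2) (f x) /\ cg V1 x (f x).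
    exact: (phiP _ _ _ _ x o1 ov1 o2 s1 e).
  have K t : sect S (U1 `&` U2) t -> sect S V1 t -> sect S V2 t.
    exact: (keyI s1 s2 e).
  have K' t : sect S (U1 `&` U2) t -> sect S V2 t -> sect S V1 t.
    by rewrite setIC; exact: (keyI s2 s1 (esym e)).
  have [_ hD _ hMl hMr] := sect_ideal U1.
  have [_ hDA _ hMlA hMrA] := sect_ideal (U1 `&` U2).
  split.
  + by move=> x hx; apply: sIr _ (proj1 (P x hx)).
  + move=> x y hx hy hxy; apply: K; first exact: sB (proj1 (P x hx)) (proj1 (P y hy)).
    exact: cg_trans (cg_sym (proj2 (P x hx))) (cg_trans hxy (proj2 (P y hy))).
  + move=> x y hx hy h.
    have h1 : cg V1 (f x) (f y) := K' _ (sB (proj1 (P x hx)) (proj1 (P y hy))) h.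
    exact: cg_trans (proj2 (P x hx)) (cg_trans h1 (cg_sym (proj2 (P y hy)))).
  + move=> z hz.
    have [a [ha hza]] := decomp _ _ _ _ z o2 ov2 o1 s2 (esym e) hz.
    rewrite setIC in ha.
    have hau : sect S U1 a := sIl _ ha.
    exists a; split => //.
    have [fa1 fa2] := P a hau.
    exact: cg_trans hza (K _ (sB ha fa1) fa2).
  + split.
    * move=> x y hx hy; have hxy := hD _ _ hx hy.
      apply: K; first exact: sB (proj1 (P _ hxy)) (hDA _ _ (proj1 (P x hx)) (proj1 (P y hy))).
      exact: cg_trans (cg_sym (proj2 (P _ hxy))) (cg_add (proj2 (P x hx)) (proj2 (P y hy))).
    * move=> x y hx hy; have hxy := hMr y _ hx.
      apply: K; first exact: sB (proj1 (P _ hxy)) (hMrA (f y) _ (proj1 (P x hx))).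
      exact: cg_trans (cg_sym (proj2 (P _ hxy)))
        (cg_trans (cg_mulr y (proj2 (P x hx))) (cg_mull (f x) (proj2 (P y hy)))).
    * move=> r x hx; have hrx := hMl r _ hx.
      apply: K; first exact: sB (proj1 (P _ hrx)) (hMlA r _ (proj1 (P x hx))).
      exact: cg_trans (cg_sym (proj2 (P _ hrx))) (cg_mull r (proj2 (P x hx))).
    * move=> r x hx; have hrx := hMr r _ hx.
      apply: K; first exact: sB (proj1 (P _ hrx)) (hMrA r _ (proj1 (P x hx))).
      exact: cg_trans (cg_sym (proj2 (P _ hrx))) (cg_mulr r (proj2 (P x hx))).
- move=> U1 V1 U2 V2 U3 V3 o1 ov1 o2 ov2 o3 ov3 s1 s2 s3 e12 e31 x hx.
  have [a1 c1] := phiP _ _ _ _ x o1 ov1 o2 s1 e12 hx.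
  have ha : sect S U2 (phi U1 V1 U2 V2 x) := sIr _ a1.
  have e23 : U2 `\` V2 = U3 `\` V3 by rewrite e31 e12.
  have [b1 b2] := phiP _ _ _ _ _ o2 ov2 o3 s2 e23 ha.
  have [d1 d2] := phiP _ _ _ _ x o1 ov1 o3 s1 (esym e31) hx.
  apply: (sect_sep (A:=U3) (B:=V1 `|` V2)).
  + move=> p [u3 h]; have [//|nv3] := pselect (V3 p).
    have h3 : (U3 `\` V3) p by [].
    case: h => v.
    * by move: h3; rewrite e31 => -[].
    * by move: h3; rewrite -e23 => -[].
  + exact: sB (sIr _ b1) (sIr _ d1).
  + have sub1 : V1 `<=` V1 `|` V2 by move=> p; left.
    have sub2 : V2 `<=` V1 `|` V2 by move=> p; right.
    exact: cg_trans (cg_sym (cg_sub sub2 b2)) (cg_trans (cg_sym (cg_sub sub1 c1)) (cg_sub sub1 d2)).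
Qed.

End H.

Theorem lemma3p5 (R : pzRingType) (S : set (set R)) :
  good_family S ->
  (forall I, S I -> I = ker [set p | Spec S p /\ I `<=` p]) ->
  (forall U V, jopen S U -> jopen S V ->
     sect S (U `|` V) = isum (sect S U) (sect S V) /\
     sect S (U `&` V) = sect S U `&` sect S V) /\
  (exists phi : set (set R) -> set (set R) -> set (set R) -> set (set R) -> R -> R,
     (forall U1 V1 U2 V2,
        jopen S U1 -> jopen S V1 -> jopen S U2 -> jopen S V2 ->
        V1 `<=` U1 -> V2 `<=` U2 -> U1 `\` V1 = U2 `\` V2 ->
        quot_iso (sect S U1) (sect S V1) (sect S U2) (sect S V2)
                 (phi U1 V1 U2 V2)) /\
     (forall U1 V1 U2 V2 U3 V3,
        jopen S U1 -> jopen S V1 -> jopen S U2 -> jopen S V2 ->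
        jopen S U3 -> jopen S V3 ->
        V1 `<=` U1 -> V2 `<=` U2 -> V3 `<=` U3 ->
        U1 `\` V1 = U2 `\` V2 -> U3 `\` V3 = U1 `\` V1 ->
        forall x, sect S U1 x ->
          sect S V3 (phi U2 V2 U3 V3 (phi U1 V1 U2 V2 x) - phi U1 V1 U3 V3 x))).
Proof. by move=> gS hker; exact: (@main_thm R S gS hker). Qed.
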